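(* Let $(X,d_X)$ be an extended pseudometric space, $\Delta\subset X$, and $S,T$ multisets of elements of $X$. Then $d^{\Delta,d_X}_\infty(S,T)=\max\{\delta^{\Delta,d_X}_\infty(S,T),\ \delta^{\Delta,d_X}_\infty(T,S)\}.$
   Context: An extended pseudometric is a symmetric function $d_X\colon X\times X\to[0,\infty]$ satisfying the triangle inequality and $d_X(x,x)=0$. A multiset of elements of $X$ is a set together with a map to $X$. For $\epsilon\ge0$, an $\epsilon$-matching between $S$ and $T$ relative to $\Delta$ consists of submultisets $S'\subset S$, $T'\subset T$ such that every $x\in(S\setminus S')\cup(T\setminus T')$ has some $y\in\Delta$ with $d_X(x,y)\le\epsilon$, together with a bijection $f\colon S'\to T'$ with $d_X(x,f(x))\le\epsilon$ for all $x\in S'$. An $\epsilon$-embedding of $S$ into $T$ relative to $\Delta$ consists of a submultiset $S'\subset S$ such that every $x\in S\setminus S'$ has some $y\in\Delta$ with $d_X(x,y)\le\epsilon$, together with an injection $f\colon S'\to T$ with $d_X(x,f(x))\le\epsilon$ for all $x\in S'$. The bottleneck distance is $d^{\Delta,d_X}_\infty(S,T)=\inf\{\epsilon\ge0:\text{an }\epsilon\text{-matching between }S,T\text{ relative to }\Delta\text{ exists}\}$ and the hemidistance is $\delta^{\Delta,d_X}_\infty(S,T)=\inf\{\epsilon\ge0:\text{an }\epsilon\text{-embedding of }S\text{ into }T\text{ relative to }\Delta\text{ exists}\}$ (infimum of the empty set $=\infty$). *)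

(* Defs.v *)
From HB Require Import structures.
From mathcomp Require Import all_boot all_order all_algebra.
From mathcomp Require Import all_classical all_reals ereal.
Set Implicit Arguments. Unset Strict Implicit. Unset Printing Implicit Defensive.
Import Order.TTheory GRing.Theory Num.Theory.
Local Open Scope classical_set_scope.
Local Open Scope ereal_scope.

Definition ext_pseudometric (R : realType) (X : Type) (d : X -> X -> \bar R) : Prop :=
  (forall x y, 0 <= d x y) /\ (forall x, d x x = 0) /\
  (forall x y, d x y = d y x) /\ (forall x y z, d x z <= d x y + d y z).

(* A multiset of elements of X is an index type I together with s : I -> X.
   A submultiset is a subset S' : set I of the index type. *)

Definition near_diag (R : realType) (X : Type) (d : X -> X -> \bar R)
  (Delta : set X) (eps : \bar R) (x : X) : Prop :=
  exists y, Delta y /\ d x y <= eps.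

Definition eps_matching (R : realType) (X : Type) (d : X -> X -> \bar R)
  (Delta : set X) (I J : Type) (s : I -> X) (t : J -> X) (eps : \bar R) : Prop :=
  exists (S' : set I) (T' : set J),
    (forall i, ~ S' i -> near_diag d Delta eps (s i)) /\
    (forall j, ~ T' j -> near_diag d Delta eps (t j)) /\
    exists f : {i : I | S' i} -> {j : J | T' j},
      bijective f /\ forall i, d (s (proj1_sig i)) (t (proj1_sig (f i))) <= eps.

Definition eps_embedding (R : realType) (X : Type) (d : X -> X -> \bar R)
  (Delta : set X) (I J : Type) (s : I -> X) (t : J -> X) (eps : \bar R) : Prop :=
  exists (S' : set I),
    (forall i, ~ S' i -> near_diag d Delta eps (s i)) /\
    exists f : {i : I | S' i} -> J,
      injective f /\ forall i, d (s (proj1_sig i)) (t (f i)) <= eps.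

(* Bottleneck distance and hemidistance (inf of empty set is +oo). *)
Definition bottleneck (R : realType) (X : Type) (d : X -> X -> \bar R)
  (Delta : set X) (I J : Type) (s : I -> X) (t : J -> X) : \bar R :=
  ereal_inf [set e | 0 <= e /\ eps_matching d Delta s t e].

Definition hemidist (R : realType) (X : Type) (d : X -> X -> \bar R)
  (Delta : set X) (I J : Type) (s : I -> X) (t : J -> X) : \bar R :=
  ereal_inf [set e | 0 <= e /\ eps_embedding d Delta s t e].

(* Main.v *)
Require Import Defs.
From HB Require Import structures.
From mathcomp Require Import all_boot all_order all_algebra.
From mathcomp Require Import all_classical all_reals ereal.
Import Order.TTheory GRing.Theory Num.Theory.
Local Open Scope classical_set_scope.
Local Open Scope ereal_scope.

Lemma sig_eq (A : Type) (P : A -> Prop) (a b : {x | P x}) :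
  proj1_sig a = proj1_sig b -> a = b.
Proof.
case: a => a pa; case: b => b pb /= eab; subst b.
by rewrite (Prop_irrelevance pa pb).
Qed.

Inductive inC (I J : Type) (S' : set I) (T' : set J)
  (f : {i | S' i} -> J) (g : {j | T' j} -> I) : I -> Prop :=
| inC0 x : (forall j, g j <> x) -> inC I J S' T' f g x
| inC1 (x : {i | S' i}) (h : T' (f x)) :
    inC I J S' T' f g (proj1_sig x) -> inC I J S' T' f g (g (exist _ (f x) h)).
Arguments inC {I J S' T'} f g _.
Arguments inC0 {I J S' T'} f g x _.
Arguments inC1 {I J S' T'} f g x h _.

Lemma match_of_emb (R : realType) (X : Type) (d : X -> X -> \bar R)
  (hsym : forall x y, d x y = d y x) (Delta : set X)
  (I J : Type) (s : I -> X) (t : J -> X) (e : \bar R) :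
  eps_embedding d Delta s t e -> eps_embedding d Delta t s e ->
  eps_matching d Delta s t e.
Proof.
move=> [S' [hS [f [finj hf]]]] [T' [hT [g [ginj hg]]]].
set C := inC f g.
set rel := fun x y => (C x /\ exists p : S' x, f (exist _ x p) = y) \/
                      (~ C x /\ exists q : T' y, g (exist _ y q) = x).
pose S'' := fun x => (C x /\ S' x) \/ ~ C x.
have ex : forall x : {i | S'' i}, exists y, rel (proj1_sig x) y.
  case=> x [[Cx Sx]|nCx] /=.
    by exists (f (exist _ x Sx)); left; split => //; exists Sx.
  have [[y q] gy] : exists j, g j = x.
    apply: contrapT => hn; apply: nCx; apply: inC0 => j gj; apply: hn; by exists j.
  by exists y; right; split => //; exists q.
have relfun : forall x y1 y2, rel x y1 -> rel x y2 -> y1 = y2.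
  move=> x y1 y2 [[Cx [p1 e1]]|[nCx [q1 e1]]] [[Cx' [p2 e2]]|[nCx' [q2 e2]]] //.
  - by rewrite -e1 -e2 (Prop_irrelevance p1 p2).
  - have := ginj _ _ (etrans e1 (esym e2)) => /(congr1 (@proj1_sig _ _)) //.
have relinj : forall x1 x2 y, rel x1 y -> rel x2 y -> x1 = x2.
  have mixed : forall x1 x2 y, C x1 -> (exists p : S' x1, f (exist _ x1 p) = y) ->
      ~ C x2 -> (exists q : T' y, g (exist _ y q) = x2) -> False.
    move=> x1 x2 y Cx1 [p1 e1] nCx2 [q2 e2]; subst y.
    apply: nCx2; rewrite -e2.
    exact: (inC1 f g (exist _ x1 p1) q2 Cx1).
  move=> x1 x2 y [[Cx [p1 e1]]|[nCx [q1 e1]]] [[Cx' [p2 e2]]|[nCx' [q2 e2]]].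
  - have := finj _ _ (etrans e1 (esym e2)).
    by move=> /(congr1 (@proj1_sig _ _)).
  - by exfalso; exact: (mixed x1 x2 y Cx (ex_intro _ p1 e1) nCx' (ex_intro _ q2 e2)).
  - by exfalso; exact: (mixed x2 x1 y Cx' (ex_intro _ p2 e2) nCx (ex_intro _ q1 e1)).
  - by rewrite -e1 -e2 (Prop_irrelevance q1 q2).
pose m := fun x : {i | S'' i} => proj1_sig (cid (ex x)).
have hm : forall x, rel (proj1_sig x) (m x) by move=> x; rewrite /m; case: cid.
pose T'' := fun y => exists x : {i | S'' i}, m x = y.
exists S'', T''; split; [|split].
- move=> i hi; have [Ci nSi] : C i /\ ~ S' i.
    split; first by apply: contrapT => nC; apply hi; right.
    by move=> Si; apply hi; left; split => //; apply: contrapT => nC; apply hi; right.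
  exact: hS.
- move=> j hj; apply: hT => q; apply hj.
  have Hc : forall x, rel x j -> S'' x -> T'' j.
    by move=> x rx Sx; exists (exist S'' x Sx); exact: (relfun x _ _ (hm (exist S'' x Sx)) rx).
  case: (pselect (C (g (exist _ j q)))) => Cg.
  + inversion Cg as [x hx ex'|x h Cx ex'].
      by exfalso; apply: (hx (exist _ j q)).
    have := ginj _ _ ex' => /(congr1 (@proj1_sig _ _)) /= fj.
    apply: (Hc (proj1_sig x)).
      by left; split => //; exists (proj2_sig x); rewrite -fj; case: x {h Cx ex' fj}.
    by left; split => //; exact: (proj2_sig x).
  + apply: (Hc (g (exist _ j q))); last by right.
    by right; split => //; exists q.
- pose F := fun x : {i | S'' i} => exist T'' (m x) (ex_intro _ x erefl).
  exists F; split.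
  + pose G := fun y : {j | T'' j} => proj1_sig (cid (proj2_sig y)).
    exists G.
    * move=> x; apply: sig_eq; rewrite /G /F /=.
      case: cid => x' /= hx'.
      apply: relinj (hm x') _; rewrite hx'; exact: hm.
    * move=> y; apply: sig_eq; rewrite /G /F /=.
      by case: cid.
  + move=> [x Sx] /=.
    have := hm (exist _ x Sx); rewrite /=.
    move=> [[Cx [p e1]]|[nCx [q e1]]].
      by rewrite -e1; exact: (hf (exist _ x p)).
    rewrite hsym; have := hg (exist _ (m (exist _ x Sx)) q).
    by rewrite /= e1.
Qed.

Lemma emb_mono (R : realType) (X : Type) (d : X -> X -> \bar R) (Delta : set X)
  (I J : Type) (s : I -> X) (t : J -> X) (e1 e2 : \bar R) :
  e1 <= e2 -> eps_embedding d Delta s t e1 -> eps_embedding d Delta s t e2.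
Proof.
move=> le12 [S' [hS [f [finj hf]]]]; exists S'; split.
  move=> i /hS [y [Dy dy]]; exists y; split => //; exact: le_trans le12.
exists f; split => // i; exact: le_trans (hf i) le12.
Qed.

Lemma match_emb1 (R : realType) (X : Type) (d : X -> X -> \bar R) (Delta : set X)
  (I J : Type) (s : I -> X) (t : J -> X) (e : \bar R) :
  eps_matching d Delta s t e -> eps_embedding d Delta s t e.
Proof.
move=> [S' [T' [hS [hT [f [fbij hf]]]]]]; exists S'; split => //.
exists (fun i => proj1_sig (f i)); split => //.
move=> i1 i2 /sig_eq; exact: bij_inj.
Qed.

Lemma match_emb2 (R : realType) (X : Type) (d : X -> X -> \bar R)
  (hsym : forall x y, d x y = d y x) (Delta : set X)
  (I J : Type) (s : I -> X) (t : J -> X) (e : \bar R) :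
  eps_matching d Delta s t e -> eps_embedding d Delta t s e.
Proof.
move=> [S' [T' [hS [hT [f [[g fK gK] hf]]]]]]; exists T'; split => //.
exists (fun j => proj1_sig (g j)); split.
  move=> j1 j2 /sig_eq; exact: (can_inj gK).
move=> j; rewrite hsym; have := hf (g j); by rewrite gK.
Qed.

Theorem proposition7p2 (R : realType) (X : Type) (d : X -> X -> \bar R)
  (hd : ext_pseudometric d) (Delta : set X)
  (I J : Type) (s : I -> X) (t : J -> X) :
  bottleneck d Delta s t =
  Order.max (hemidist d Delta s t) (hemidist d Delta t s).
Proof.
have hsym : forall x y, d x y = d y x by case: hd => _ [_ [? _]].
apply/le_anti/andP; split; last first.
  rewrite ge_max; apply/andP; split; apply: le_ereal_inf => e [e0 he]; split => //.
    exact: match_emb1.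
  exact: match_emb2.
rewrite leNgt; apply/negP => H.
have := H; rewrite gt_max => /andP [H1 H2].
have [x1 [x10 hx1] lx1] := ereal_inf_lt H1.
have [x2 [x20 hx2] lx2] := ereal_inf_lt H2.
have : bottleneck d Delta s t <= Order.max x1 x2.
  apply: ereal_inf_lbound; split; first by rewrite le_max x10.
  apply: match_of_emb => //.
    by apply: emb_mono hx1; rewrite le_max lexx.
  by apply: emb_mono hx2; rewrite le_max lexx orbT.
by rewrite leNgt gt_max lx1 lx2.
Qed.
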